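(* Let $R_1,\ldots,R_n$ be left localization maximal rings and $R:=R_1\times\cdots\times R_n$. For $i=1,\ldots,n$ let $S_i:=R_1\times\cdots\times R_i^*\times\cdots\times R_n$, where $R_i^*$ is the group of units of $R_i$ (placed in the $i$-th coordinate). Then: (1) $\max\mathrm{Den}_l(R)=\{S_1,\ldots,S_n\}$; (2) $\mathrm{ass}(S_i)=R_1\times\cdots\times 0\times\cdots\times R_n$ ($0$ in the $i$-th place) for each $i$, and $\mathrm{ass}(S_i)+\mathrm{ass}(S_j)=R$ for all $i\neq j$; (3) $S_i^{-1}R\cong R_i\cong R/\mathrm{ass}(S_i)$, and the map $\sigma_i:R\to S_i^{-1}R$, $r\mapsto\frac{r}{1}$, is (under these identifications) the map $R\to R/\mathrm{ass}(S_i)$, $r\mapsto r+\mathrm{ass}(S_i)$; (4) $\mathfrak{l}_R=0$; (5) the ring homomorphism $\sigma:=\prod_{i=1}^n\sigma_i:R\to\prod_{i=1}^nS_i^{-1}R$, $r\mapsto(\frac{r}{1},\ldots,\frac{r}{1})$, is an isomorphism; (6) $\bigcap_{i=1}^nS_i=R^*=R_1^*\times\cdots\times R_n^*$, the group of units of $R$; (7) the set $\mathcal{L}_l(R)=\bigcup_{i=1}^nS_i$ of left localizable elements of $R$ consists precisely of the elements $(r_1,\ldots,r_n)\in R$ such that $r_i\in R_i^*$ for some $i$; (8) the set of left non-localizable elements of $R$ equals $\prod_{i=1}^n(R_i\setminus R_i^* )$, and for each $i$ the set of left non-localizable elements of $R_i$ is $R_i\setminus R_i^*$.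
   Context: All rings are associative with $1$. A multiplicative subset $S$ of $R$ ($1\in S$, $0\notin S$, closed under multiplication) is a left Ore set if $Sr\cap Rs\neq\emptyset$ for all $r\in R$, $s\in S$; for it, $\mathrm{ass}(S):=\{r\in R: sr=0\text{ for some } s\in S\}$. A left Ore set $S$ is a left denominator set if $rs=0$ ($r\in R$, $s\in S$) implies $tr=0$ for some $t\in S$. $\mathrm{Den}_l(R)$ is the set of left denominator sets, $S^{-1}R$ the left localization, $\max\mathrm{Den}_l(R)$ the set of maximal elements of $(\mathrm{Den}_l(R),\subseteq)$, and $\mathfrak{l}_R:=\bigcap_{S\in\max\mathrm{Den}_l(R)}\mathrm{ass}(S)$. An element $r\in R$ is left localizable if $r\in S$ for some $S\in\mathrm{Den}_l(R)$, and left non-localizable otherwise; $\mathcal{L}_l(R)$ is the set of left localizable elements. For a ring $A$, $S_0(A)$ is the largest left Ore set of $A$ consisting of regular elements and $Q_l(A):=S_0(A)^{-1}A$. A ring $A$ is a left localization maximal ring if $A=Q_l(A)$ (i.e. $S_0(A)$ consists of units) and $\{\mathrm{ass}(S):S\in\mathrm{Den}_l(A)\}=\{0\}$. *)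

(* Defs.v *)
From HB Require Import structures.
From mathcomp Require Import all_boot all_order all_algebra.
From mathcomp Require Import classical_sets.

Set Implicit Arguments.
Unset Strict Implicit.
Unset Printing Implicit Defensive.

Import GRing.Theory.
Local Open Scope ring_scope.
Local Open Scope classical_set_scope.

Section DProd.
Variables (I : finType) (R : I -> pzRingType).

Definition dprod := {dffun forall i : I, R i}.

HB.instance Definition _ := Choice.on dprod.

Definition dp_zero : dprod := [ffun i => 0].
Definition dp_opp (x : dprod) : dprod := [ffun i => - x i].
Definition dp_add (x y : dprod) : dprod := [ffun i => x i + y i].
Definition dp_one : dprod := [ffun i => 1].
Definition dp_mul (x y : dprod) : dprod := [ffun i => x i * y i].

Fact dp_addA : associative dp_add.
Proof. by move=> x y z; apply/ffunP=> i; rewrite !ffunE addrA. Qed.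
Fact dp_addC : commutative dp_add.
Proof. by move=> x y; apply/ffunP=> i; rewrite !ffunE addrC. Qed.
Fact dp_add0 : left_id dp_zero dp_add.
Proof. by move=> x; apply/ffunP=> i; rewrite !ffunE add0r. Qed.
Fact dp_addN : left_inverse dp_zero dp_opp dp_add.
Proof. by move=> x; apply/ffunP=> i; rewrite !ffunE addNr. Qed.

HB.instance Definition _ :=
  GRing.isZmodule.Build dprod dp_addA dp_addC dp_add0 dp_addN.

Fact dp_mulA : associative dp_mul.
Proof. by move=> x y z; apply/ffunP=> i; rewrite !ffunE mulrA. Qed.
Fact dp_mul1 : left_id dp_one dp_mul.
Proof. by move=> x; apply/ffunP=> i; rewrite !ffunE mul1r. Qed.
Fact dp_mulr1 : right_id dp_one dp_mul.
Proof. by move=> x; apply/ffunP=> i; rewrite !ffunE mulr1. Qed.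
Fact dp_mulDl : left_distributive dp_mul +%R.
Proof. by move=> x y z; apply/ffunP=> i; rewrite !ffunE mulrDl. Qed.
Fact dp_mulDr : right_distributive dp_mul +%R.
Proof. by move=> x y z; apply/ffunP=> i; rewrite !ffunE mulrDr. Qed.

HB.instance Definition _ :=
  GRing.Zmodule_isPzRing.Build dprod dp_mulA dp_mul1 dp_mulr1 dp_mulDl dp_mulDr.

Lemma dprod0E (i : I) : (0 : dprod) i = 0. Proof. by rewrite ffunE. Qed.
Lemma dprod1E (i : I) : (1 : dprod) i = 1. Proof. by rewrite ffunE. Qed.
Lemma dprodDE (x y : dprod) (i : I) : (x + y) i = x i + y i.
Proof. by rewrite ffunE. Qed.
Lemma dprodME (x y : dprod) (i : I) : (x * y) i = x i * y i.
Proof. by rewrite ffunE. Qed.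

End DProd.

Section LocNotions.
Variable R : pzRingType.

Definition units_of : set R := [set x | exists y : R, x * y = 1 /\ y * x = 1].

Definition mult_subset (S : set R) : Prop :=
  [/\ S 1, ~ S 0 & forall a b, S a -> S b -> S (a * b)].

Definition left_Ore (S : set R) : Prop :=
  mult_subset S /\
  forall (r s : R), S s -> exists (s' r' : R), S s' /\ s' * r = r' * s.

Definition ass (S : set R) : set R := [set r | exists s, S s /\ s * r = 0].

Definition left_den (S : set R) : Prop :=
  left_Ore S /\
  forall (r s : R), S s -> r * s = 0 -> exists t, S t /\ t * r = 0.

Definition Den_l : set (set R) := [set S | left_den S].

Definition maxDen_l : set (set R) :=
  [set S | left_den S /\ forall T, left_den T -> S `<=` T -> T = S].

Definition lrad : set R := [set r | forall S, maxDen_l S -> ass S r].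

Definition left_localizable (r : R) : Prop := exists S, left_den S /\ S r.
Definition L_l : set R := [set r | left_localizable r].

Definition regular : set R :=
  [set r | (forall x, r * x = 0 -> x = 0) /\ (forall x, x * r = 0 -> x = 0)].

Definition is_S0 (S : set R) : Prop :=
  [/\ left_Ore S, S `<=` regular &
      forall T, left_Ore T -> T `<=` regular -> T `<=` S].

(* left localization maximal ring:
   R = Q_l(R) (i.e. S_0(R) consists of units) and
   {ass(S) : S in Den_l(R)} = {0}. *)
Definition left_loc_maximal : Prop :=
  (exists S0, is_S0 S0 /\ S0 `<=` units_of) /\
  [set ass S | S in Den_l] = [set [set 0]].

End LocNotions.

(* A left localization (left ring of fractions) of R at S (Lam, Lectures
   on Modules and Rings, Def. 10.1, left version): a ring homomorphism
   sigma : R -> Q such that (i) sigma(S) consists of units of Q,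
   (ii) every element of Q has the form sigma(s)^-1 sigma(r), and
   (iii) ker sigma = ass(S). *)
Definition is_left_loc (R Q : pzRingType) (S : set R)
    (sigma : {rmorphism R -> Q}) : Prop :=
  [/\ forall s, S s -> units_of (sigma s),
      forall q : Q, exists s r, S s /\ sigma s * q = sigma r &
      forall r, sigma r = 0 <-> ass S r].

Arguments units_of R : clear implicits.
Arguments Den_l R : clear implicits.
Arguments maxDen_l R : clear implicits.
Arguments lrad R : clear implicits.
Arguments L_l R : clear implicits.
Arguments regular R : clear implicits.
Arguments left_loc_maximal R : clear implicits.

(* Main.v *)
Require Import Defs.
From HB Require Import structures.
From mathcomp Require Import all_boot all_order all_algebra.
From mathcomp Require Import boolp classical_sets.
Import GRing.Theory.
Local Open Scope ring_scope.
Local Open Scope classical_set_scope.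

Definition dinj {I : finType} {R : I -> nzRingType} (i : I) (y : R i) : dprod R :=
  [ffun j => if (i =P j) is ReflectT e then ecast k (R k) e y else 0].

Lemma dinj_eq {I : finType} {R : I -> nzRingType} (i : I) (y : R i) : dinj i y i = y.
Proof. rewrite /dinj ffunE; case: eqP => // e; by rewrite (eq_irrelevance e erefl). Qed.

Lemma dinj_neq {I : finType} {R : I -> nzRingType} (i j : I) (y : R i) :
  i != j -> dinj i y j = 0.
Proof. by move=> ne; rewrite /dinj ffunE; case: eqP => // e; rewrite e eqxx in ne. Qed.

Lemma dprodP {I : finType} {R : I -> nzRingType} (x y : dprod R) :
  (forall i, x i = y i) -> x = y.
Proof. by move=> h; apply/ffunP. Qed.

Lemma dprodBE {I : finType} {R : I -> nzRingType} (x y : dprod R) i :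
  (x - y) i = x i - y i.
Proof. by rewrite !ffunE. Qed.

Lemma dinj_mull {I : finType} {R : I -> nzRingType} (i : I) (a : R i) (x : dprod R) j :
  (dinj i a * x) j = dinj i (a * x i) j.
Proof.
rewrite dprodME; case: (eqVneq i j) => [<-|ne]; first by rewrite !dinj_eq.
by rewrite !dinj_neq // mul0r.
Qed.

Lemma dinj_mulr {I : finType} {R : I -> nzRingType} (i : I) (a : R i) (x : dprod R) j :
  (x * dinj i a) j = dinj i (x i * a) j.
Proof.
rewrite dprodME; case: (eqVneq i j) => [<-|ne]; first by rewrite !dinj_eq.
by rewrite !dinj_neq // mulr0.
Qed.

Lemma unit0 (A : nzRingType) : ~ units_of A 0.
Proof. by case=> y [h _]; move: h; rewrite mul0r => /esym/eqP; rewrite oner_eq0. Qed.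

Lemma unitM (A : pzRingType) (a b : A) : units_of A a -> units_of A b -> units_of A (a * b).
Proof.
move=> [a' [h1 h2]] [b' [h3 h4]]; exists (b' * a'); split.
  by rewrite mulrA -(mulrA a) h3 mulr1 h1.
by rewrite mulrA -(mulrA b') h2 mulr1 h4.
Qed.

Lemma unit1 (A : pzRingType) : units_of A 1.
Proof. by exists 1; rewrite mulr1. Qed.

Lemma left_max_units (A : nzRingType) : left_loc_maximal A ->
  forall S, left_den S -> S `<=` units_of A.
Proof.
move=> [[S0 [[OS0 rS0 mS0] S0u]] hass] S dS.
have : [set ass S | S in Den_l A] (ass S) by exists S.
rewrite hass /= => eA.
have hA x : ass S x -> x = 0 by rewrite eA.
apply: (subset_trans _ S0u); apply: mS0; first by case: dS.
move=> s Ss; split=> x hx; apply: hA.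
  by exists s.
by case: dS => _ /(_ x s Ss hx).
Qed.

Lemma units_den (A : nzRingType) : left_den (units_of A).
Proof.
split; [split; [split|]|].
- exact: unit1.
- exact: unit0.
- exact: unitM.
- move=> r s [s' [h1 h2]]; exists 1, (r * s'); split; first exact: unit1.
  by rewrite mul1r -mulrA h2 mulr1.
- move=> r s [s' [h1 h2]] hrs; exists 1; split; first exact: unit1.
  by rewrite mul1r -(mulr1 r) -h1 mulrA hrs mul0r.
Qed.

Definition Sset {I : finType} {R : I -> nzRingType} (i : I) : set (dprod R) :=
  [set x | units_of (R i) (x i)].

Lemma Sset_ass {I : finType} {R : I -> nzRingType} (i : I) :
  ass (@Sset I R i) = [set x | x i = 0].
Proof.
apply/seteqP; split=> x /=.
  move=> [s [[s' [h1 h2]] hsx]].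
  by rewrite -[x i]mul1r -h2 -mulrA -dprodME hsx dprod0E mulr0.
move=> hx; exists (dinj i 1); split; first by rewrite /Sset /= dinj_eq; exact: unit1.
apply: dprodP => j; rewrite dinj_mull dprod0E mul1r hx.
by case: (eqVneq i j) => [<-|ne]; rewrite ?dinj_eq ?dinj_neq.
Qed.

Lemma Sset_den {I : finType} {R : I -> nzRingType} (i : I) : left_den (@Sset I R i).
Proof.
split; [split; [split|]|].
- by rewrite /Sset /= dprod1E; exact: unit1.
- by rewrite /Sset /= dprod0E; exact: unit0.
- by move=> a b; rewrite /Sset /= dprodME; exact: unitM.
- move=> r s [s' [h1 h2]]; exists (dinj i 1), (dinj i (r i * s')); split.
    by rewrite /Sset /= dinj_eq; exact: unit1.
  apply: dprodP => j; rewrite !dinj_mull mul1r -mulrA h2 mulr1.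
  by case: (eqVneq i j) => [<-|ne]; rewrite ?dinj_eq ?dinj_neq.
- move=> r s [s' [h1 h2]] hrs; exists (dinj i 1); split.
    by rewrite /Sset /= dinj_eq; exact: unit1.
  apply: dprodP => j; rewrite dinj_mull mul1r dprod0E.
  have -> : r i = 0.
    by rewrite -(mulr1 (r i)) -h1 mulrA -dprodME hrs dprod0E mul0r.
  by case: (eqVneq i j) => [<-|ne]; rewrite ?dinj_eq ?dinj_neq.
Qed.

Lemma proj_den {I : finType} {R : I -> nzRingType} (T : set (dprod R)) (i : I) :
  left_den T -> (forall t, T t -> t i <> 0) -> left_den [set t i | t in T].
Proof.
move=> [[[T1 T0 TM] TO] TD] hnz; split; [split; [split|]|].
- by exists 1; rewrite ?dprod1E.
- by move=> [t Tt]; apply: hnz.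
- by move=> _ _ [a Ta <-] [b Tb <-]; exists (a * b); [exact: TM|rewrite dprodME].
- move=> r _ [t Tt <-]; have [s' [r' [Ts' e]]] := TO (dinj i r) t Tt.
  exists (s' i), (r' i); split; first by exists s'.
  by have := congr1 (fun x : dprod R => x i) e; rewrite /= !dprodME dinj_eq.
- move=> r _ [t Tt <-] hrt.
  have e : dinj i r * t = 0.
    by apply: dprodP => j; rewrite dinj_mull dprod0E hrt; case: (eqVneq i j) => [<-|ne]; rewrite ?dinj_eq ?dinj_neq.
  have [u [Tu hu]] := TD _ _ Tt e.
  exists (u i); split; first by exists u.
  by have := congr1 (fun x : dprod R => x i) hu; rewrite /= dprodME dinj_eq dprod0E.
Qed.

Lemma den_sub_Sset {I : finType} {R : I -> nzRingType} :
  (forall i, left_loc_maximal (R i)) ->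
  forall T : set (dprod R), left_den T -> exists i, T `<=` Sset i.
Proof.
move=> hmax T dT.
have [[i hi]|hno] := pselect (exists i, forall t, T t -> t i <> 0).
  exists i => t Tt; rewrite /Sset /=.
  have := @left_max_units _ (hmax i) _ (proj_den _ _ dT hi) (t i); apply; by exists t.
exfalso.
have hf : forall i, exists t, T t /\ t i = 0.
  move=> i; apply: contrapT => hn; apply: hno; exists i => t Tt ti0.
  by apply: hn; exists t.
pose f i := proj1_sig (cid (hf i)).
have Tf i : T (f i) by rewrite /f; case: cid => ? [].
have fi i : f i i = 0 by rewrite /f; case: cid => ? [].
case: dT => [[[T1 T0 TM] _] _].
have Tp : forall s : seq I, exists t, T t /\ forall j, j \in s -> t j = 0.
  elim=> [|a s [t [Tt ht]]]; first by exists 1.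
  exists (f a * t); split; first exact: TM.
  move=> j; rewrite inE dprodME => /orP[/eqP->|js]; first by rewrite fi mul0r.
  by rewrite ht // mulr0.
have [t [Tt ht]] := Tp (enum I).
apply: T0; suff <- : t = 0 by [].
by apply: dprodP => j; rewrite dprod0E ht // mem_enum.
Qed.

Lemma Sset_sub {I : finType} {R : I -> nzRingType} (i j : I) :
  @Sset I R i `<=` Sset j -> i = j.
Proof.
move=> h; apply/eqP; apply: contraT => ne.
have : Sset i (dinj i (1 : R i)) by rewrite /Sset /= dinj_eq; exact: unit1.
move/h; rewrite /Sset /= dinj_neq // => /unit0 [].
Qed.

Lemma maxDen_eq {I : finType} {R : I -> nzRingType} :
  (forall i, left_loc_maximal (R i)) ->
  maxDen_l (dprod R) = [set Sset i | i in [set: I]].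
Proof.
move=> hmax; apply/seteqP; split.
  move=> T [dT mT]; have [i hi] := den_sub_Sset hmax _ dT.
  by exists i => //; apply: mT => //; exact: Sset_den.
move=> _ [i _ <-]; split; first exact: Sset_den.
move=> T dT sub; have [j hj] := den_sub_Sset hmax _ dT.
have ij := Sset_sub _ _ (subset_trans sub hj); subst j.
by apply/seteqP; split.
Qed.

Lemma loc_ker {I : finType} {R : I -> nzRingType} {i : I} {Q : pzRingType}
  {sigma : {rmorphism dprod R -> Q}} : is_left_loc (Sset i) sigma ->
  forall r, sigma r = 0 <-> r i = 0.
Proof. by move=> [_ _ hk] r; rewrite hk Sset_ass. Qed.

Lemma loc_surj {I : finType} {R : I -> nzRingType} {i : I} {Q : pzRingType}
  {sigma : {rmorphism dprod R -> Q}} : is_left_loc (Sset i) sigma ->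
  forall q, exists r, sigma r = q.
Proof.
move=> hl; have hk := loc_ker hl; case: hl => _ hq _ q.
have [s [r [[v [h1 h2]] e]]] := hq q.
have e1 : sigma (dinj i v) * sigma s = 1.
  rewrite -rmorphM; apply/eqP; rewrite -subr_eq0 -(rmorph1 sigma) -rmorphB; apply/eqP.
  by apply/hk; rewrite dprodBE dprod1E dinj_mull dinj_eq h2 subrr.
exists (dinj i v * r); by rewrite rmorphM -e mulrA e1 mul1r.
Qed.

Lemma loc_eq {I : finType} {R : I -> nzRingType} {i : I} {Q : pzRingType}
  {sigma : {rmorphism dprod R -> Q}} : is_left_loc (Sset i) sigma ->
  forall r r', sigma r = sigma r' <-> r i = r' i.
Proof.
move=> hl r r'; have hk := loc_ker hl.
split => e.
  by apply/eqP; rewrite -subr_eq0 -dprodBE; apply/eqP/hk; rewrite rmorphB e subrr.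
by apply/eqP; rewrite -subr_eq0 -rmorphB; apply/eqP/hk; rewrite dprodBE e subrr.
Qed.

Lemma mk_rmorph (Q S : pzRingType) (g : Q -> S) :
  g 1 = 1 -> (forall x y, g (x + y) = g x + g y) -> (forall x y, g (x * y) = g x * g y) ->
  {f : {rmorphism Q -> S} | forall x, f x = g x}.
Proof.
move=> g1 gD gM.
have g0 : g 0 = 0 by apply/(addrI (g 0)); rewrite -gD !addr0.
pose f : {rmorphism Q -> S} :=
  HB.pack g (GRing.isNmodMorphism.Build Q S g (g0, gD)) (GRing.isMonoidMorphism.Build Q S g (g1, gM)).
by exists f.
Qed.

Lemma loc_iso {I : finType} {R : I -> nzRingType} {i : I} {Q : pzRingType}
  {sigma : {rmorphism dprod R -> Q}} : is_left_loc (Sset i) sigma ->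
  exists g : {rmorphism Q -> R i}, bijective g /\ forall r, g (sigma r) = r i.
Proof.
move=> hl.
pose pre q := proj1_sig (cid (loc_surj hl q)).
have preE q : sigma (pre q) = q by rewrite /pre; case: cid.
pose g0 q := pre q i.
have gs r : g0 (sigma r) = r i by apply/(loc_eq hl); rewrite preE.
have g1 : g0 1 = 1 by rewrite -(rmorph1 sigma) gs dprod1E.
have gD x y : g0 (x + y) = g0 x + g0 y.
  by rewrite -(preE x) -(preE y) -rmorphD !gs dprodDE.
have gM x y : g0 (x * y) = g0 x * g0 y.
  by rewrite -(preE x) -(preE y) -rmorphM !gs dprodME.
have [f fE] := @mk_rmorph Q (R i) g0 g1 gD gM.
exists f; split; last by move=> r; rewrite fE gs.
exists (fun y => sigma (dinj i y)) => [q|y]; rewrite fE.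
  by rewrite -{2}(preE q); apply/(loc_eq hl); rewrite dinj_eq.
by rewrite gs dinj_eq.
Qed.

Lemma bij_of (A B : Type) (f : A -> B) : injective f -> (forall y, exists x, f x = y) -> bijective f.
Proof.
move=> fi fs; pose h y := proj1_sig (cid (fs y)).
have hE y : f (h y) = y by rewrite /h; case: cid.
by exists h => // x; apply: fi; rewrite hE.
Qed.

Lemma proj_loc {I : finType} {R : I -> nzRingType} (i : I) :
  exists sigma : {rmorphism dprod R -> R i}, is_left_loc (Sset i) sigma.
Proof.
have [f fE] := @mk_rmorph (dprod R) (R i) (fun x => x i) (dprod1E R i)
  (fun x y => dprodDE x y i) (fun x y => dprodME x y i).
exists f; split.
- by move=> s; rewrite fE.
- move=> q; exists 1, (dinj i q); split; first by rewrite /Sset /= dprod1E; exact: unit1.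
  by rewrite !fE dprod1E dinj_eq mul1r.
- by move=> r; rewrite Sset_ass fE.
Qed.

Lemma units_dprod {I : finType} {R : I -> nzRingType} :
  units_of (dprod R) = [set x : dprod R | forall i, units_of (R i) (x i)].
Proof.
apply/seteqP; split=> x /=.
  move=> [y [h1 h2]] i; exists (y i); split.
    by rewrite -dprodME h1 dprod1E.
  by rewrite -dprodME h2 dprod1E.
move=> hu; pose y := [ffun i => proj1_sig (cid (hu i))] : dprod R.
have yE i : x i * y i = 1 /\ y i * x i = 1 by rewrite /y ffunE; case: cid.
exists y; split; apply: dprodP => i; rewrite dprodME dprod1E; by case: (yE i).
Qed.

Theorem theorem2p9 (n : nat) (R : 'I_n -> nzRingType) :
  (0 < n)%N ->
  (forall i, left_loc_maximal (R i)) ->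
  let RR := dprod R in
  let S := fun i : 'I_n => [set x : RR | units_of (R i) (x i)] in
  (* (1) *)
  maxDen_l RR = [set S i | i in [set: 'I_n]] /\
  (* (2) *)
  ((forall i, ass (S i) = [set x : RR | x i = 0]) /\
   (forall i j, i != j ->
      forall r : RR, exists a b, ass (S i) a /\ ass (S j) b /\ r = a + b)) /\
  (* (3) *)
  (forall i,
     (exists (Q : pzRingType) (sigma : {rmorphism RR -> Q}),
        is_left_loc (S i) sigma) /\
     (forall (Q : pzRingType) (sigma : {rmorphism RR -> Q}),
        is_left_loc (S i) sigma ->
        exists g : {rmorphism Q -> R i},
          bijective g /\ forall r : RR, g (sigma r) = r i) /\
     ((forall y : R i, exists r : RR, r i = y) /\
      (forall r : RR, r i = 0 <-> ass (S i) r))) /\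
  (* (4) *)
  lrad RR = [set 0] /\
  (* (5) *)
  (forall (Q : 'I_n -> pzRingType) (sigma : forall i, {rmorphism RR -> Q i}),
     (forall i, is_left_loc (S i) (sigma i)) ->
     bijective (fun r : RR => [ffun i => sigma i r] : dprod Q)) /\
  (* (6) *)
  (\bigcap_i S i = units_of RR /\
   units_of RR = [set x : RR | forall i, units_of (R i) (x i)]) /\
  (* (7) *)
  (L_l RR = \bigcup_i S i /\
   L_l RR = [set x : RR | exists i, units_of (R i) (x i)]) /\
  (* (8) *)
  (~` L_l RR = [set x : RR | forall i, ~ units_of (R i) (x i)] /\
   forall i, ~` L_l (R i) = ~` units_of (R i)).
Proof.
move=> n0 hmax RR S.
have SE : S = @Sset _ R by [].
have LE : L_l RR = [set x : RR | exists i, units_of (R i) (x i)].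
  apply/seteqP; split=> x /=.
    move=> [T [dT Tx]]; have [i hi] := den_sub_Sset hmax _ dT.
    by exists i; apply: hi.
  by move=> [i hi]; exists (Sset i); split; [exact: Sset_den|].
split; first by rewrite SE maxDen_eq.
split.
  split=> [i|i j ij r]; first by rewrite SE Sset_ass.
  exists (r - r * dinj i 1), (r * dinj i 1); rewrite SE !Sset_ass /=.
  rewrite dprodBE dinj_mulr dinj_eq mulr1 subrr; split => //; split; last by rewrite subrK.
  by rewrite dinj_mulr dinj_neq // eq_sym.
split.
  move=> i; split; first by have [sg h] := proj_loc (R:=R) i; exists (R i), sg.
  split; first by move=> Q sg; rewrite SE => /loc_iso.
  split; first by move=> y; exists (dinj i y); rewrite dinj_eq.
  by move=> r; rewrite SE Sset_ass.
split.
  apply/seteqP; split=> x /=.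
    move=> h; apply: dprodP => i; rewrite dprod0E.
    have : ass (S i) x by apply: h; rewrite SE maxDen_eq //; exists i.
    by rewrite SE Sset_ass.
  move=> ->{x} T [[[[T1 _ _] _] _] _]; exists 1; split => //; by rewrite mulr0.
split.
  move=> Q sg hl; apply: bij_of.
    move=> x y /= e; apply: dprodP => i.
    have := congr1 (fun f : dprod Q => f i) e; rewrite /= !ffunE.
    by move/(loc_eq (hl i)).
  move=> q; have hp i := loc_surj (hl i) (q i).
  pose p i := proj1_sig (cid (hp i)).
  have pE i : sg i (p i) = q i by rewrite /p; case: cid.
  exists ([ffun i => p i i] : dprod R); apply/ffunP => i; rewrite ffunE -pE.
  by apply/(loc_eq (hl i)); rewrite ffunE.
split.
  split; last exact: units_dprod.
  rewrite units_dprod; apply/seteqP; split=> x /=.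
    by move=> h i; apply: (h i).
  by move=> h i _; apply: h.
split.
  split => //; rewrite LE; apply/seteqP; split=> x /=.
    by move=> [i hi]; exists i.
  by move=> [i _ hi]; exists i.
split.
  rewrite LE; apply/seteqP; split=> x /=.
    by move=> h i hi; apply: h; exists i.
  by move=> h [i hi]; exact: h hi.
move=> i; congr (~` _); apply/seteqP; split=> x /=.
  by move=> [T [dT Tx]]; exact: (@left_max_units _ (hmax i) _ dT x Tx).
by move=> hx; exists (units_of (R i)); split; [exact: units_den|].
Qed.
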